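(* Let $\gamma\in\Gamma$ and $n,n'\in\mathbb{N}_+$. Then $\max\{\mathcal{H}_{n'}(\mathcal{S}_h):h\in\mathrm{RL}(n,n')\}\preceq\gamma_{\min(n',n),n'}$.
   Context: $\sigma(x)=\max(0,x)$; $\mathrm{RL}(n,n')$ ($n,n'\in\mathbb{N}_+$) is the set of maps $h:\mathbb{R}^n\to\mathbb{R}^{n'}$, $h(x)_i=\sigma(\langle x,w_i\rangle+b_i)$ for some $W\in\mathbb{R}^{n'\times n}$ with rows $w_i$, $b\in\mathbb{R}^{n'}$; convention: $\mathrm{RL}(0,n')$ are constant maps $\{0\}\to\mathbb{R}^{n'}$ with $\mathcal{H}_{n'}(\mathcal{S}_h)={\rm e}_0$. $S_h(x)_i=1$ iff $\langle x,w_i\rangle+b_i>0$ else $0$; $\mathcal{S}_h=\{S_h(x):x\in\mathbb{R}^n\}$; $|s|=\sum_is_i$. $V$: sequences $(v_j)_{j\in\mathbb{N}}$ of nonnegative integers with finite sum; ${\rm e}_i$ has $({\rm e}_i)_j=\delta_{ij}$; $v\preceq w$ iff $\sum_{j\ge J}v_j\le\sum_{j\ge J}w_j$ for all $J\in\mathbb{N}$; for a finite family, $\max_i(v^{(i)})_J=\max_i\sum_{j\ge J}v^{(i)}_j-\max_i\sum_{j\ge J+1}v^{(i)}_j$. $\mathcal{H}_{n'}(\mathcal{S})=(|\{s\in\mathcal{S}:|s|=j\}|)_j$. $\Gamma$: families $(\gamma_{n,n'})_{n'\in\mathbb{N}_+,n\in\{0,\dots,n'\}}$ in $V$ with (i)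 $\max\{\mathcal{H}_{n'}(\mathcal{S}_h):h\in\mathrm{RL}(n,n')\}\preceq\gamma_{n,n'}$ for all $n'\in\mathbb{N}_+$, $n\in\{0,\dots,n'\}$, (ii) $n\le\tilde n\le n'\Rightarrow\gamma_{n,n'}\preceq\gamma_{\tilde n,n'}$. *)

(* Defs.v *)
From HB Require Import structures.
From mathcomp Require Import all_boot all_order all_algebra.
From Stdlib Require Import Rdefinitions.
From mathcomp Require Import boolp Rstruct.

Set Implicit Arguments.
Unset Strict Implicit.
Unset Printing Implicit Defensive.

Import Order.TTheory GRing.Theory Num.Theory.
Local Notation R := Rdefinitions.R.

(* Elements of V: finitely supported sequences of naturals, represented as
   finite lists (index j = position; entries beyond the list are 0). *)
Definition Vec := seq nat.

Definition tail (v : Vec) (J : nat) : nat := sumn (drop J v).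

Definition preceq (v w : Vec) : Prop := forall J : nat, tail v J <= tail w J.

Definition evec (i : nat) : Vec := rcons (nseq i 0) 1.

Definition pattern (n' : nat) := {ffun 'I_n' -> bool}.

Definition psize n' (s : pattern n') : nat := #|[pred i | s i]|.

(* S_h(x) for the ReLU layer h with weights W (rows w_i) and biases b *)
Local Open Scope ring_scope.
Definition actpat (n n' : nat) (W : 'I_n' -> 'I_n -> R) (b : 'I_n' -> R)
  (x : 'I_n -> R) : pattern n' :=
  [ffun i => (0 < \sum_(k < n) (W i k * x k) + b i)].

Local Close Scope ring_scope.

Definition patset (n n' : nat) (W : 'I_n' -> 'I_n -> R) (b : 'I_n' -> R)
  : {set pattern n'} :=
  [set s | `[< exists x : 'I_n -> R, actpat W b x = s >]].

Definition realizable (n n' : nat) : {set {set pattern n'}} :=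
  [set S | `[< exists (W : 'I_n' -> 'I_n -> R) (b : 'I_n' -> R), patset W b = S >]].

Definition hist (n' : nat) (S : {set pattern n'}) : Vec :=
  mkseq (fun j => #|[set s in S | psize s == j]|) n'.+1.

(* max_i over the finite family {H_{n'}(𝒮_h) : h ∈ RL(n,n')}, defined as in
   the paper: max_J = max_i tail_J - max_i tail_{J+1}.  For n = 0 the
   convention H_{n'}(𝒮_h) = e_0 is used. *)
Definition maxTail (n n' : nat) (J : nat) : nat :=
  \max_(S in realizable n n') tail (hist S) J.

Definition maxH (n n' : nat) : Vec :=
  if n == 0 then evec 0
  else mkseq (fun J => maxTail n n' J - maxTail n n' J.+1) n'.+1.

(* membership in Γ; gamma n n' stands for γ_{n,n'} (only the values with
   n' >= 1, n <= n' matter) *)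
Definition inGamma (gamma : nat -> nat -> Vec) : Prop :=
  (forall n' n : nat, 0 < n' -> n <= n' -> preceq (maxH n n') (gamma n n')) /\
  (forall n' n nt : nat, 0 < n' -> n <= nt -> nt <= n' ->
      preceq (gamma n n') (gamma nt n')).

(* Main.v *)
Require Import Defs.
From mathcomp Require Import all_boot.
From mathcomp Require Import all_order all_algebra boolp Rstruct.
From mathcomp Require Import zify.
From Stdlib Require Import Rdefinitions.

Set Implicit Arguments.
Unset Strict Implicit.
Unset Printing Implicit Defensive.
Import GRing.Theory.

Section RS.
Local Open Scope ring_scope.
Lemma realizable_sub n n' : realizable n n' \subset realizable n' n'.
Proof.
apply/subsetP => S; rewrite !inE => /asboolP [W [b <-]].
apply/asboolP.
pose M : 'M[Rdefinitions.R]_(n, n') := \matrix_(k < n, i < n') W i k.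
pose A := (<<M>>)%MS.
exists (fun i k => A k i), b.
apply/setP => s; rewrite !inE; apply/asboolP/asboolP => -[x <-].
- have: ((\row_(k < n') x k) *m A <= M)%MS by rewrite -(genmxE M) submxMl.
  case/submxP => u Hu.
  exists (fun k => u 0 k); apply/ffunP => i; rewrite !ffunE.
  have := congr1 (fun m : 'M_(1,n') => m 0 i) Hu; rewrite !mxE => E.
  have -> : \sum_(k < n) W i k * u 0 k = \sum_(k < n') A k i * x k.
    transitivity (\sum_k u 0 k * M k i).
      by apply: eq_bigr => k _; rewrite mxE mulrC.
    rewrite -E; apply: eq_bigr => k _; by rewrite mxE mulrC.
  by [].
- have: ((\row_(k < n) x k) *m M <= A)%MS by rewrite genmxE submxMl.
  case/submxP => u Hu.
  exists (fun k => u 0 k); apply/ffunP => i; rewrite !ffunE.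
  have := congr1 (fun m : 'M_(1,n') => m 0 i) Hu; rewrite !mxE => E.
  have -> : \sum_(k < n') A k i * u 0 k = \sum_(k < n) W i k * x k.
    transitivity (\sum_k u 0 k * A k i).
      by apply: eq_bigr => k _; rewrite mulrC.
    rewrite -E; apply: eq_bigr => k _; by rewrite !mxE mulrC.
  by [].
Qed.
End RS.

Lemma tail_succ v J : tail v J.+1 <= tail v J.
Proof.
rewrite /tail -[J.+1]/(1 + J) -drop_drop.
case: (drop J v) => [|x t] //=; rewrite drop0; lia.
Qed.

Lemma maxTail_succ n n' J : maxTail n n' J.+1 <= maxTail n n' J.
Proof.
apply/bigmax_leqP => S HS; apply: leq_trans (tail_succ _ _) _.
exact: leq_bigmax_cond.
Qed.

Lemma maxTail_end n n' : maxTail n n' n'.+1 = 0.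
Proof.
apply/eqP; rewrite -leqn0; apply/bigmax_leqP => S _.
by rewrite /tail drop_oversize // size_mkseq.
Qed.

Lemma tele (m : nat -> nat) K (Hm : forall j, m j.+1 <= m j) :
  forall d J, J + d = K ->
  sumn (drop J (mkseq (fun j => m j - m j.+1) K)) = m J - m K.
Proof.
have mono : forall a b, a <= b -> m b <= m a.
  move=> a b /subnKC <-; elim: (b - a) => [|k IH]; first by rewrite addn0.
  by rewrite addnS; apply: leq_trans (Hm _) IH.
elim=> [|d IH] J HJ.
  by rewrite addn0 in HJ; subst; rewrite drop_oversize ?size_mkseq // subnn.
rewrite (drop_nth 0) ?size_mkseq; last by lia.
rewrite /= IH; last by lia.
rewrite nth_mkseq; last by lia.
have h1 := Hm J; have h2 := mono J.+1 K ltac:(lia); lia.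
Qed.

Lemma tail_maxH n n' J : 0 < n -> tail (maxH n n') J = maxTail n n' J.
Proof.
move=> Hn; rewrite /maxH; case: eqP => [E|_]; first by rewrite E in Hn.
case: (leqP J n'.+1) => HJ.
  rewrite /tail (@tele (maxTail n n') n'.+1 (@maxTail_succ n n') (n'.+1 - J) J)
    ?maxTail_end ?subn0 //; lia.
rewrite /tail drop_oversize ?size_mkseq; last by lia.
apply/esym/eqP; rewrite -leqn0 -(maxTail_end n n').
have: forall d, maxTail n n' (n'.+1 + d) <= maxTail n n' n'.+1.
  elim=> [|d IH]; first by rewrite addn0.
  by rewrite addnS; apply: leq_trans (maxTail_succ _ _ _) IH.
by move/(_ (J - n'.+1)); rewrite subnKC //; lia.
Qed.

Theorem mainTheorem5 (gamma : nat -> nat -> Vec) (Hg : inGamma gamma)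
  (n n' : nat) (Hn : 0 < n) (Hn' : 0 < n') :
  preceq (maxH n n') (gamma (minn n' n) n').
Proof.
case: Hg => H1 _.
case: (leqP n n') => Hle.
  exact: (H1 n' n Hn' Hle).
move=> J.
apply: leq_trans (H1 n' n' Hn' (leqnn _) J).
rewrite (tail_maxH _ _ Hn) (tail_maxH _ _ Hn').
apply/bigmax_leqP => S HS.
apply: leq_bigmax_cond.
exact: (subsetP (@realizable_sub n n')).
Qed.
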